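(* Let $(U,\mathcal{I})$ be a laminar matroid given by a laminar family $\mathcal{F}$ with positive integer capacities $\mu(\cdot)$ such that $\mu(B)<\mu(B')$ whenever $B\subsetneq B'$ are in $\mathcal{F}$. Let $f$ be non-negative, monotonically non-decreasing and submodular, $p\in(0,1)$, and run $\mathrm{SIMULATE}$ (see context) to obtain $M,N,w$. Let $$S=N\setminus\bigcup_{B\in\mathcal{F}:\,|N\cap B|>\mu(B)}(N\cap B),$$ i.e. all elements of $N\cap B$ are removed for every $B$ whose constraint is violated by $N$. Let $\beta=2e(1-p)$ and assume $\beta<1$. Then $$\mathbb{E}[w(S)]\ge\Big(1-\frac{2\beta}{(1-\beta)^3}\Big)\mathbb{E}[w(N)].$$
   Context: Laminar matroid: $\mathcal{F}$ is a family of distinct subsets of $U$ any two of which are disjoint or nested, and $\mathcal{I}=\{T\subseteq U:|T\cap B|\le\mu(B)\ \forall B\in\mathcal{F}\}$. Write $f_T(e)=f(T\cup\{e\})-f(T)$; $e$ in $\beta$ denotes the base of the natural logarithm. $\mathrm{SIMULATE}$: each element of $U$ is independently put into a set $H$ with probability $p$. Start with $M=N=\emptyset$. While there exists $e\in U\setminus(M\cup N)$ with $M\cup\{e\}\in\mathcal{I}$, take such an $e$ maximizing $f_M(e)$ (ties broken by a fixed rule); let $M_e$ be the current $M$; if $e\in H$ add $e$ to $M$, else to $N$. Define $w(e)=f_{M_e}(e)$ for $e\in M\cup N$, $w(e)=0$ otherwise, and $w(T)=\sum_{e\in T}w(e)$. *)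

(* Defs.v *)
From HB Require Import structures.
From mathcomp Require Import all_boot all_order all_algebra.
From mathcomp Require Import reals sequences.
Set Implicit Arguments. Unset Strict Implicit. Unset Printing Implicit Defensive.
Import Order.TTheory GRing.Theory Num.Theory.
Local Open Scope ring_scope.

Section Defs.
Variables (R : realType) (U : finType).

Definition laminar (F : {set {set U}}) : Prop :=
  forall A B, A \in F -> B \in F ->
    [disjoint A & B] \/ A \subset B \/ B \subset A.

Definition lam_indep (F : {set {set U}}) (mu : {set U} -> nat) (T : {set U}) : bool :=
  [forall B in F, #|T :&: B| <= mu B]%N.

Definition nonneg_fun (f : {set U} -> R) := forall A : {set U}, 0 <= f A.
Definition monotone_fun (f : {set U} -> R) := forall A B : {set U}, A \subset B -> f A <= f B.
Definition submodular (f : {set U} -> R) :=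
  forall A B : {set U}, f (A :|: B) + f (A :&: B) <= f A + f B.

Definition marg (f : {set U} -> R) (T : {set U}) (e : U) : R := f (e |: T) - f T.

Definition state := ({set U} * {set U} * {ffun U -> R})%type.

(* A tie-breaking rule: given the current M, N and the (nonempty) set of
   eligible maximizers, returns one of them. *)
Definition valid_tiebreak (tb : {set U} -> {set U} -> {set U} -> U) : Prop :=
  forall M N C, C != set0 -> tb M N C \in C.

(* One iteration of the while loop of SIMULATE, for a fixed sample H. *)
Definition sim_step F mu (f : {set U} -> R) tb (H : {set U}) (s : state) : state :=
  let: (M, N, w) := s in
  let C := [set e | (e \notin M :|: N) && lam_indep F mu (e |: M)] in
  if C == set0 then s else
  let Cmax := [set e in C | [forall e' in C, marg f M e' <= marg f M e]] in
  let e := tb M N Cmax in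
  let w' := [ffun x => if x == e then marg f M e else w x] in
  if e \in H then (e |: M, N, w') else (M, e |: N, w').

(* Each non-final iteration adds a new element to M :|: N, so #|U| iterations
   suffice to reach the end of the while loop. w is 0 outside M :|: N. *)
Definition simulate F mu f tb (H : {set U}) : state :=
  iter #|U| (sim_step F mu f tb H) (set0, set0, [ffun => 0]).

Definition sim_M F mu f tb H := (simulate F mu f tb H).1.1.
Definition sim_N F mu f tb H := (simulate F mu f tb H).1.2.
Definition sim_w F mu f tb H := (simulate F mu f tb H).2.

Definition wsum (w : {ffun U -> R}) (T : {set U}) : R := \sum_(e in T) w e.

Definition prune (F : {set {set U}}) (mu : {set U} -> nat) (N : {set U}) : {set U} :=
  N :\: \bigcup_(B in F | (mu B < #|N :&: B|)%N) (N :&: B).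

Definition Exp (p : R) (X : {set U} -> R) : R :=
  \sum_(H : {set U}) p ^+ #|H| * (1 - p) ^+ #|~: H| * X H.

End Defs.

(* Main.v *)
Require Import Defs.
From HB Require Import structures.
From mathcomp Require Import all_boot all_order all_algebra.
From mathcomp Require Import reals sequences exp.
From mathcomp Require Import zify ring lra.
Import Order.TTheory GRing.Theory Num.Theory.
Local Open Scope ring_scope.
Set Implicit Arguments. Unset Strict Implicit. Unset Printing Implicit Defensive.

Section S.
Variables (R : realType) (U : finType) (F : {set {set U}})
  (mu : {set U} -> nat) (f : {set U} -> R)
  (tb : {set U} -> {set U} -> {set U} -> U).
Hypothesis tbV : valid_tiebreak tb.
Hypothesis fmono : monotone_fun f.
Hypothesis fsub : submodular f.

Local Notation step H := (sim_step F mu f tb H).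

Definition cand (M N : {set U}) :=
  [set e | (e \notin M :|: N) && lam_indep F mu (e |: M)].
Definition cmax M N :=
  [set e in cand M N | [forall e' in cand M N, marg f M e' <= marg f M e]].
Definition chosen M N := tb M N (cmax M N).
Definition wupd M N (w : {ffun U -> R}) : {ffun U -> R} :=
  [ffun x => if x == chosen M N then marg f M (chosen M N) else w x].

Lemma step_eq H M N w : step H (M, N, w) =
  if cand M N == set0 then (M, N, w) else
  if chosen M N \in H then (chosen M N |: M, N, wupd M N w)
  else (M, chosen M N |: N, wupd M N w).
Proof. by []. Qed.

Lemma cmax_n0 M N : cand M N != set0 -> cmax M N != set0.
Proof.
case/set0Pn => e0 He0.
case: (@arg_maxP _ R _ e0 (mem (cand M N)) (marg f M)) => // i Hi Hmax.
apply/set0Pn; exists i; rewrite inE; apply/andP; split; first exact: Hi.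
by apply/forallP => e'; apply/implyP => He'; apply: Hmax.
Qed.

Lemma chosen_props M N : cand M N != set0 ->
  [/\ chosen M N \notin M :|: N, lam_indep F mu (chosen M N |: M) &
      forall e', e' \in cand M N -> marg f M e' <= marg f M (chosen M N)].
Proof.
move=> Hc; have := tbV M N (cmax_n0 Hc); rewrite -/(chosen M N).
rewrite inE => /andP[]; rewrite inE => /andP[H1 H2] /forallP H3.
split=> // e' He'; exact: (implyP (H3 e')).
Qed.

Lemma marg_ge0 (M : {set U}) e : 0 <= marg f M e.
Proof. by rewrite /marg subr_ge0; apply: fmono; apply: subsetUr. Qed.

Lemma marg_sub (M M' : {set U}) e : M \subset M' -> marg f M' e <= marg f M e.
Proof.
move=> sMM'; case: (boolP (e \in M')) => HeM'.
  rewrite /marg (setUidPr _); last by rewrite sub1set.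
  by rewrite subrr marg_ge0.
have := fsub (e |: M) M'.
have -> : (e |: M) :|: M' = e |: M'.
  apply/setP => x; rewrite !inE; case: (x == e) => //=.
  by case Hx: (x \in M) => //=; rewrite (subsetP sMM').
have -> : (e |: M) :&: M' = M.
  apply/setP => x; rewrite !inE; case: eqP => [->|_] /=.
    rewrite (negbTE HeM') ?andbF /=. apply/esym/negbTE; apply: contra HeM'.
    exact: (subsetP sMM').
  by case Hx: (x \in M) => //=; rewrite (subsetP sMM').
by rewrite /marg => H; lra.
Qed.

Definition Lval (s : state R U) : R :=
  let: (M, N, w) := s in
  if cand M N == set0 then 0 else marg f M (chosen M N).

Lemma Lval_ge0 s : 0 <= Lval s.
Proof. by case: s => [[M N] w] /=; case: ifP => // _; exact: marg_ge0. Qed.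

Lemma lam_indep_sub (T T' : {set U}) : T \subset T' -> lam_indep F mu T' -> lam_indep F mu T.
Proof.
move=> sTT' /forallP H; apply/forallP => B; apply/implyP => HB.
apply: leq_trans (implyP (H B) HB); apply: subset_leq_card; exact: setSI.
Qed.

Lemma cand_sub (M N M' N' : {set U}) : M \subset M' -> M :|: N \subset M' :|: N' ->
  cand M' N' \subset cand M N.
Proof.
move=> s1 s2; apply/subsetP => x; rewrite !inE => /andP[H1 H2].
apply/andP; split.
  by apply: contra H1 => Hx; move: (subsetP s2 x); rewrite !inE; apply.
apply: lam_indep_sub H2; exact: setUS.
Qed.

Lemma Lval_step (M N : {set U}) w (M' N' : {set U}) w' : cand M N != set0 ->
  M \subset M' -> M :|: N \subset M' :|: N' ->
  Lval (M', N', w') <= Lval (M, N, w).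
Proof.
move=> Hc s1 s2 /=; rewrite (negbTE Hc).
case: ifP => Hc'; first exact: marg_ge0.
have [_ _ Hmax] := chosen_props Hc.
have [H1 H2 _] := chosen_props (negbT Hc').
apply: le_trans (marg_sub _ s1) _; apply: Hmax.
apply: (subsetP (cand_sub s1 s2)); rewrite inE H1 /=; exact: H2.
Qed.

End S.
Section Q.
Variable R : realType.
Variables (p e2 y : R).
Hypotheses (hp : 0 <= p) (he2 : 0 <= e2) (hy : 1 <= y) (hpy : p + e2 * y <= y).

Definition qk (k j : nat) : R := e2 ^+ k * y ^+ j * ('C(k + j - 1, k))%:R.
Definition qm (m a b : nat) : R := qk (m.+1 - a) (m - b).

Lemma qk_ge0 k j : 0 <= qk k j.
Proof. by rewrite /qk !mulr_ge0 ?exprn_ge0 // (le_trans ler01 hy). Qed.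

Lemma qk0_ge1 j : 1 <= qk 0 j.
Proof. by rewrite /qk expr0 mul1r bin0 mulr1 exprn_ege1. Qed.

Lemma qk_super k j : p * qk k j + e2 * qk k.-1 j.+1 <= qk k j.+1.
Proof.
have y0 : 0 <= y by apply: le_trans ler01 hy.
case: k => [|k] /=.
  rewrite /qk !expr0 !mul1r !add0n !bin0 !mulr1.
  have -> : p * y ^+ j + e2 * y ^+ j.+1 = (p + e2 * y) * y ^+ j.
    by rewrite exprS; ring.
  by rewrite exprS; apply: ler_wpM2r; rewrite ?exprn_ge0.
rewrite /qk.
have -> : (k.+1 + j - 1 = k + j)%N by lia.
have -> : (k + j.+1 - 1 = k + j)%N by lia.
have -> : (k.+1 + j.+1 - 1 = (k + j).+1)%N by lia.
rewrite binS natrD.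
set C1 := ('C(k + j, k.+1))%:R; set C2 := ('C(k + j, k))%:R.
have C10 : 0 <= C1 by rewrite ler0n.
have hpy' : p <= y.
  by apply: le_trans hpy; rewrite lerDl mulr_ge0.
have -> : e2 ^+ k.+1 * y ^+ j.+1 * (C1 + C2) =
   y * (e2 ^+ k.+1 * y ^+ j * C1) + e2 * (e2 ^+ k * y ^+ j.+1 * C2).
  by rewrite !exprS; ring.
rewrite lerD2r; apply: ler_wpM2r => //.
by rewrite !mulr_ge0 ?exprn_ge0.
Qed.

Lemma qm_super m a b : (b < m)%N -> p * qm m a b.+1 + e2 * qm m a.+1 b <= qm m a b.
Proof.
move=> hb; rewrite /qm.
have -> : (m - b = (m - b.+1).+1)%N by lia.
have -> : (m.+1 - a.+1 = (m.+1 - a).-1)%N by lia.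
exact: qk_super.
Qed.

Lemma qm_viol m a b : (m < a)%N -> 1 <= qm m a b.
Proof. by move=> h; rewrite /qm (_ : m.+1 - a = 0)%N ?qk0_ge1 //; lia. Qed.

End Q.
Lemma key_ineq (R : realType) (p eps e2 W L LM LN q0 q1 q2 : R) :
  0 <= p -> 0 <= eps -> e2 = 2 * eps -> 0 <= W -> 0 <= LM -> LM <= L ->
  0 <= LN -> LN <= L -> 0 <= q1 -> 0 <= q2 -> p * q1 + e2 * q2 <= q0 ->
  p * ((W + LM) * q1) + eps * ((L + W + LN) * q2) <= (W + L) * q0.
Proof.
move=> hp he -> hW hLM hLM' hLN hLN' hq1 hq2 hq.
have h1 : p * ((W + LM) * q1) <= p * ((W + L) * q1).
  by apply: ler_wpM2l => //; apply: ler_wpM2r => //; rewrite lerD2l.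
have h2 : eps * ((L + W + LN) * q2) <= eps * ((2 * (W + L)) * q2).
  by apply: ler_wpM2l => //; apply: ler_wpM2r => //; lra.
apply: le_trans (lerD h1 h2) _.
have -> : p * ((W + L) * q1) + eps * (2 * (W + L) * q2) =
          (W + L) * (p * q1 + 2 * eps * q2) by ring.
by apply: ler_wpM2l => //; lra.
Qed.

Section S2.
Variables (R : realType) (U : finType) (F : {set {set U}})
  (mu : {set U} -> nat) (f : {set U} -> R)
  (tb : {set U} -> {set U} -> {set U} -> U) (p : R).
Hypothesis tbV : valid_tiebreak tb.
Hypothesis fmono : monotone_fun f.
Hypothesis fsub : submodular f.
Hypotheses (hp0 : 0 < p) (hp1 : p < 1) (he2 : 2 * (1 - p) < 1).

Local Notation eps := (1 - p).
Local Notation e2 := (2 * (1 - p)).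
Local Notation yv := ((1 - 2 * (1 - p))^-1).
Local Notation step H := (sim_step F mu f tb H).
Local Notation cand := (cand F mu).
Local Notation chosen := (chosen F mu f tb).
Local Notation Lval := (Lval F mu f tb).
Local Notation wupd := (wupd F mu f tb).

Lemma e2_ge0 : 0 <= e2. Proof. move: hp1; lra. Qed.
Lemma eps_ge0 : 0 <= eps. Proof. move: hp1; lra. Qed.
Lemma yv_ge1 : 1 <= yv.
Proof. have h : 0 < 1 - e2 by move: he2; lra. by rewrite invf_ge1 //; move: hp1; lra. Qed.
Lemma pyv : p + e2 * yv <= yv.
Proof.
have h : (1 - e2) * yv = 1 by rewrite mulfV //; apply/eqP; move: he2; lra.
have : p <= 1 by move: hp1; lra.
rewrite mulrBl mul1r in h; move: h; set t := e2 * yv; lra.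
Qed.

Definition Pen (B : {set U}) (s : state R U) : R :=
  let: (M, N, w) := s in
  if (#|M :&: B| + #|N :&: B| == 0)%N then 0
  else (wsum w (N :&: B) + Lval s) * qm e2 yv (mu B) #|N :&: B| #|M :&: B|.

Definition Phi (c : R) (s : state R U) : R :=
  c * wsum s.2 s.1.2 - \sum_(B in F) Pen B s.

Lemma capU1_in (e : U) (A B : {set U}) : e \in B -> (e |: A) :&: B = e |: (A :&: B).
Proof. by move=> he; rewrite setIUl (setIidPl _) // sub1set. Qed.

Lemma capU1_out (e : U) (A B : {set U}) : e \notin B -> (e |: A) :&: B = A :&: B.
Proof.
move=> he; apply/setP => x; rewrite !inE; case: eqP => [->|] //=.
by rewrite (negbTE he) andbF.
Qed.

Lemma wsum_upd (w : {ffun U -> R}) (e : U) (v : R) (A : {set U}) : e \notin A ->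
  wsum [ffun x => if x == e then v else w x] A = wsum w A.
Proof.
move=> he; apply: eq_bigr => x hx; rewrite ffunE; case: eqP => // exe.
by move: he; rewrite -exe hx.
Qed.

Lemma wsum_U1 (w : {ffun U -> R}) (e : U) (A : {set U}) : e \notin A ->
  wsum w (e |: A) = w e + wsum w A.
Proof. by move=> he; rewrite /wsum big_setU1. Qed.

Lemma Pen_step (M N : {set U}) (w : {ffun U -> R}) (B : {set U}) :
  B \in F -> (forall x, 0 <= w x) -> cand M N != set0 ->
  forall e, e = chosen M N ->
  p * Pen B (e |: M, N, wupd M N w) + eps * Pen B (M, e |: N, wupd M N w)
  <= Pen B (M, N, w) + (if e \in B then Lval (M, N, w) * qm e2 yv (mu B) 0 0 else 0).
Proof.
move=> hFB w0 hc e0 ->; set e := chosen M N.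
have [he hind hmax] := chosen_props f tbV hc; rewrite -/e in he hind hmax.
have heM : e \notin M by apply: contra he; rewrite inE => ->.
have heN : e \notin N by apply: contra he; rewrite inE => ->; rewrite orbT.
have hL : Lval (M, N, w) = marg f M e by rewrite /= (negbTE hc).
have LM0 := Lval_ge0 F mu tb fmono (e |: M, N, wupd M N w).
have LN0 := Lval_ge0 F mu tb fmono (M, e |: N, wupd M N w).
have LM1 : Lval (e |: M, N, wupd M N w) <= Lval (M, N, w).
  apply: Lval_step => //; first exact: subsetUr.
  by apply/subsetP => x; rewrite !inE => /orP[->|->]; rewrite ?orbT.
have LN1 : Lval (M, e |: N, wupd M N w) <= Lval (M, N, w).
  apply: Lval_step => //.
  by apply/subsetP => x; rewrite !inE => /orP[->|->]; rewrite ?orbT.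
have L0 := Lval_ge0 F mu tb fmono (M, N, w).
have Wn0 : 0 <= wsum w (N :&: B) by apply: sumr_ge0 => x _.
have eNB : e \notin N :&: B by rewrite inE (negbTE heN).
have eMB : e \notin M :&: B by rewrite inE (negbTE heM).
rewrite /Pen.
case: (boolP (e \in B)) => heB.
  have cM : #|(e |: M) :&: B| = #|M :&: B|.+1 by rewrite capU1_in // cardsU1 eMB.
  have cN : #|(e |: N) :&: B| = #|N :&: B|.+1 by rewrite capU1_in // cardsU1 eNB.
  have hz : forall n, (n.+1 == 0)%N = false by [].
  rewrite cM cN addnS addSn !hz (capU1_in _ heB).
  rewrite (wsum_upd _ _ eNB) wsum_U1 // (wsum_upd _ _ eNB).
  have we : wupd M N w e = Lval (M, N, w) by rewrite /wupd ffunE -/e eqxx -hL.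
  rewrite we.
  have hb : (#|M :&: B| < mu B)%N.
    have hB' := implyP (forallP hind B).
    move: (hB' hFB); rewrite capU1_in // cardsU1 eMB; done.
  have hs := qm_super (ltW hp0) e2_ge0 yv_ge1 pyv #|N :&: B| hb.
  have q1 := qk_ge0 e2_ge0 yv_ge1.
  case: ifP => h0.
    have hM : #|M :&: B| = 0%N by move: h0; rewrite addn_eq0 => /andP[/eqP].
    have hN : #|N :&: B| = 0%N by move: h0; rewrite addn_eq0 => /andP[_ /eqP].
    have -> : wsum w (N :&: B) = 0 by rewrite (cards0_eq hN) /wsum big_set0.
    rewrite hM hN in hs *.
    apply: le_trans (key_ineq (ltW hp0) eps_ge0 erefl (lexx 0) LM0 LM1 LN0 LN1
      (q1 _ _) (q1 _ _) hs) _.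
    by rewrite !add0r.
  rewrite -[X in X <= _]addr0; apply: lerD.
    exact: (key_ineq (ltW hp0) eps_ge0 erefl Wn0 LM0 LM1 LN0 LN1 (q1 _ _) (q1 _ _) hs).
  exact: mulr_ge0 L0 (q1 _ _).
rewrite !capU1_out //.
rewrite (wsum_upd _ _ eNB) addr0.
case: ifP => _; first by rewrite !mulr0 addr0.
set q := qm _ _ _ _ _.
have q0 : 0 <= q by exact: qk_ge0 e2_ge0 yv_ge1 _ _.
have h1 : p * ((wsum w (N :&: B) + Lval (e |: M, N, wupd M N w)) * q)
   <= p * ((wsum w (N :&: B) + Lval (M, N, w)) * q).
  by apply: ler_wpM2l; [exact: ltW|]; apply: ler_wpM2r => //; rewrite lerD2l.
have h2 : eps * ((wsum w (N :&: B) + Lval (M, e |: N, wupd M N w)) * q)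
   <= eps * ((wsum w (N :&: B) + Lval (M, N, w)) * q).
  by apply: ler_wpM2l; [exact: eps_ge0|]; apply: ler_wpM2r => //; rewrite lerD2l.
apply: le_trans (lerD h1 h2) _.
by rewrite -mulrDl addrC subrK mul1r.
Qed.

End S2.
Section S3.
Variables (R : realType) (U : finType) (F : {set {set U}})
  (mu : {set U} -> nat) (f : {set U} -> R)
  (tb : {set U} -> {set U} -> {set U} -> U) (p : R).
Hypothesis tbV : valid_tiebreak tb.
Hypothesis fmono : monotone_fun f.
Hypothesis fsub : submodular f.
Hypotheses (hp0 : 0 < p) (hp1 : p < 1) (he2 : 2 * (1 - p) < 1).

Local Notation eps := (1 - p).
Local Notation e2 := (2 * (1 - p)).
Local Notation yv := ((1 - 2 * (1 - p))^-1).
Local Notation step H := (sim_step F mu f tb H).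
Local Notation cand := (cand F mu).
Local Notation chosen := (chosen F mu f tb).
Local Notation Lval := (Lval F mu f tb).
Local Notation wupd := (wupd F mu f tb).
Local Notation Pen := (Pen F mu f tb p).
Local Notation Phi := (Phi F mu f tb p).

Lemma Phi_step c (M N : {set U}) (w : {ffun U -> R}) :
  (forall x, 0 <= w x) -> cand M N != set0 ->
  \sum_(B in F | chosen M N \in B) qm e2 yv (mu B) 0 0 <= c * eps ->
  Phi c (M, N, w) <= p * Phi c (chosen M N |: M, N, wupd M N w)
                     + eps * Phi c (M, chosen M N |: N, wupd M N w).
Proof.
move=> w0 hc hB.
have [he _ _] := chosen_props f tbV hc.
have heN : chosen M N \notin N by apply: contra he; rewrite inE => ->; rewrite orbT.
have L0 := Lval_ge0 F mu tb fmono (M, N, w).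
have hL : Lval (M, N, w) = marg f M (chosen M N) by rewrite /= (negbTE hc).
have hS : p * \sum_(B in F) Pen B (chosen M N |: M, N, wupd M N w)
   + eps * \sum_(B in F) Pen B (M, chosen M N |: N, wupd M N w)
   <= \sum_(B in F) Pen B (M, N, w)
      + Lval (M, N, w) * \sum_(B in F | chosen M N \in B) qm e2 yv (mu B) 0 0.
  rewrite !mulr_sumr -big_split /= big_mkcondr /= -big_split /=.
  apply: ler_sum => B hFB.
  by apply: (Pen_step tbV fmono fsub hp0 hp1 he2).
have hLB := ler_wpM2l L0 hB.
have PhiE : forall (M' N' : {set U}) w', Phi c (M', N', w') =
   c * wsum w' N' - \sum_(B in F) Pen B (M', N', w') by [].
rewrite !PhiE (wsum_upd _ _ heN) wsum_U1 // (wsum_upd _ _ heN).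
have -> : wupd M N w (chosen M N) = Lval (M, N, w) by rewrite /wupd ffunE eqxx -hL.
move: hS hLB.
set SM := \sum_(B in F) Pen B _.
set SN := \sum_(B in F) Pen B _.
set S := \sum_(B in F) Pen B _.
set Q := \sum_(B in F | _) _.
set L := Lval _.
set W := wsum w N.
move=> hS hLB.
have -> : p * (c * W - SM) + eps * (c * (L + W) - SN) =
          c * W + c * eps * L - (p * SM + eps * SN) by ring.
move: hS hLB; set X := p * SM + eps * SN; set LQ := L * Q.
rewrite (_ : L * (c * eps) = c * eps * L); last by ring.
set cel := c * eps * L.
lra.
Qed.

Definition Pw (H : {set U}) : R := p ^+ #|H| * (1 - p) ^+ #|~: H|.

Lemma Pw_ge0 H : 0 <= Pw H.
Proof. by rewrite /Pw mulr_ge0 // exprn_ge0 //; move: hp0 hp1; lra. Qed.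

Lemma Exp_ext (X X' : {set U} -> R) : (forall H, X H = X' H) -> Exp p X = Exp p X'.
Proof. by move=> h; apply: eq_bigr => H _; rewrite h. Qed.

Lemma Exp_mono (X X' : {set U} -> R) : (forall H, X H <= X' H) -> Exp p X <= Exp p X'.
Proof.
move=> h; apply: ler_sum => H _; apply: ler_wpM2l; last exact: h.
exact: Pw_ge0.
Qed.

Lemma Exp_lin (a : R) (X Y : {set U} -> R) :
  Exp p (fun H => a * X H + Y H) = a * Exp p X + Exp p Y.
Proof. by rewrite /Exp mulr_sumr -big_split; apply: eq_bigr => H _ /=; ring. Qed.

Lemma Exp_const (a : R) : Exp p (fun _ : {set U} => a) = a * Exp p (fun _ : {set U} => 1).
Proof. by rewrite /Exp mulr_sumr; apply: eq_bigr => H _ /=; ring. Qed.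

Lemma Exp1_ge0 : 0 <= Exp p (fun _ : {set U} => 1).
Proof. by apply: sumr_ge0 => H _; rewrite mulr1 -/(Pw H) Pw_ge0. Qed.

Lemma Pw_U1 (e : U) (K : {set U}) : e \notin K -> (1 - p) * Pw (e |: K) = p * Pw K.
Proof.
move=> he; rewrite /Pw cardsU1 he add1n.
have h1 := cardsC K; have h2 := cardsC (e |: K).
rewrite cardsU1 he add1n in h2.
have -> : #|~: K| = #|~: (e |: K)|.+1 by lia.
by rewrite !exprS; ring.
Qed.

Lemma setU1D1_eq (e : U) (K : {set U}) : ((e |: K) :\ e == K) = (e \notin K).
Proof.
case: (boolP (e \in K)) => h /=.
  apply/negbTE/eqP => hK; move: h; rewrite -hK !inE eqxx; done.
by rewrite setU1K ?eqxx.
Qed.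

Lemma Exp_key (Z : {set U} -> R) (e : U) :
  (forall K : {set U}, e \notin K -> Z (e |: K) = Z K) ->
  \sum_(H : {set U} | e \in H) Pw H * Z H = p * \sum_(H : {set U}) Pw H * Z H.
Proof.
move=> hZ.
rewrite [in RHS](bigID (fun H : {set U} => e \in H)) /=.
set A := \sum_(H : {set U} | e \in H) _; set Bs := \sum_(H : {set U} | e \notin H) _.
have hA : (1 - p) * A = p * Bs.
  rewrite /A (reindex_onto (fun K => e |: K) (fun H => H :\ e)) /=; last first.
    by move=> H hH; rewrite setD1K.
  rewrite !mulr_sumr; apply: eq_big => K.
    by rewrite setU11 setU1D1_eq.
  move=> /andP[_]; rewrite setU1D1_eq => hK.
  rewrite hZ //; have h := Pw_U1 hK; rewrite /Pw in h *.
  rewrite [LHS]mulrA h; ring.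
move: hA; clearbody A Bs => hA.
transitivity ((1 - p) * A + p * A); first by ring.
by rewrite hA; ring.
Qed.

Lemma Exp_split (Y1 Y2 : {set U} -> R) (e : U) :
  (forall K : {set U}, e \notin K -> Y1 (e |: K) = Y1 K) ->
  (forall K : {set U}, e \notin K -> Y2 (e |: K) = Y2 K) ->
  Exp p (fun H => if e \in H then Y1 H else Y2 H) = p * Exp p Y1 + (1 - p) * Exp p Y2.
Proof.
move=> h1 h2.
have k1 := Exp_key h1; have k2 := Exp_key h2.
have E2 : \sum_(H : {set U}) Pw H * Y2 H = \sum_(H : {set U} | e \in H) Pw H * Y2 H
   + \sum_(H : {set U} | e \notin H) Pw H * Y2 H.
  by rewrite (bigID (fun H : {set U} => e \in H)).
rewrite (_ : Exp p Y1 = \sum_(H : {set U}) Pw H * Y1 H) //.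
rewrite (_ : Exp p Y2 = \sum_(H : {set U}) Pw H * Y2 H) //.
rewrite /Exp (bigID (fun H : {set U} => e \in H)) /=.
rewrite (eq_bigr (fun H => Pw H * Y1 H)); last by move=> H ->.
rewrite [X in _ + X](eq_bigr (fun H => Pw H * Y2 H)); last by move=> H /negbTE ->.
rewrite k1 E2.
have k2' := k2; rewrite E2 in k2'.
move: k2'.
move: (\sum_(H : {set U} | e \in H) Pw H * Y2 H) (\sum_(H : {set U} | e \notin H) Pw H * Y2 H) => a b k2'.
transitivity (p * \sum_(H : {set U}) Pw H * Y1 H + ((a + b) - a)); first by ring.
by rewrite {2}k2'; ring.
Qed.

End S3.
Section S4.
Variables (R : realType) (U : finType) (F : {set {set U}})
  (mu : {set U} -> nat) (f : {set U} -> R)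
  (tb : {set U} -> {set U} -> {set U} -> U) (p : R).
Hypothesis tbV : valid_tiebreak tb.
Hypothesis fmono : monotone_fun f.
Hypothesis fsub : submodular f.
Hypotheses (hp0 : 0 < p) (hp1 : p < 1) (he2 : 2 * (1 - p) < 1).

Local Notation eps := (1 - p).
Local Notation e2 := (2 * (1 - p)).
Local Notation yv := ((1 - 2 * (1 - p))^-1).
Local Notation step H := (sim_step F mu f tb H).
Local Notation cand := (cand F mu).
Local Notation chosen := (chosen F mu f tb).
Local Notation wupd := (wupd F mu f tb).
Local Notation Phi := (Phi F mu f tb p).

Definition Dset (s : state R U) := s.1.1 :|: s.1.2.

Lemma step_agree (H H' : {set U}) (s : state R U) : (forall x, x \notin Dset s -> (x \in H) = (x \in H')) ->
  step H s = step H' s.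
Proof.
case: s => [[M N] w] h; rewrite !step_eq; case: ifP => // hc.
have [he _ _] := chosen_props f tbV (negbT hc).
by rewrite (h _ he).
Qed.

Lemma step_D (H : {set U}) (s : state R U) : Dset s \subset Dset (step H s).
Proof.
case: s => [[M N] w]; rewrite step_eq; case: ifP => _; first by rewrite subxx.
case: ifP => _; apply/subsetP => x; rewrite /Dset /= !inE => /orP[]->; by rewrite ?orbT.
Qed.

Lemma iter_agree k : forall (s : state R U) (H H' : {set U}),
  (forall x, x \notin Dset s -> (x \in H) = (x \in H')) ->
  iter k (step H) s = iter k (step H') s.
Proof.
elim: k => [//|k IH] s H H' h.
rewrite !iterSr (step_agree h); apply: IH => x hx; apply: h.
by apply: contra hx; apply: (subsetP (step_D H' s)).
Qed.

Lemma inv_step (H : {set U}) (s : state R U) : (forall x, 0 <= s.2 x) -> forall x, 0 <= (step H s).2 x.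
Proof.
case: s => [[M N] w] w0; rewrite step_eq; case: ifP => // hc.
by case: ifP => _ x /=; rewrite /wupd ffunE; case: ifP => _ //; exact: marg_ge0.
Qed.

Lemma inv_iter k (H : {set U}) (s : state R U) : (forall x, 0 <= s.2 x) ->
  forall x, 0 <= (iter k (step H) s).2 x.
Proof.
elim: k => [//|k IH] w0; rewrite iterS; apply: inv_step; exact: IH.
Qed.

Variable c : R.
Hypothesis hbud : forall e : U, \sum_(B in F | e \in B) qm e2 yv (mu B) 0 0 <= c * eps.

Lemma main_ind k : forall s : state R U, (forall x, 0 <= s.2 x) ->
  Phi c s * Exp p (fun _ : {set U} => 1)
  <= Exp p (fun H => Phi c (iter k (step H) s)).
Proof.
elim: k => [|k IH] [[M N] w] w0.
  rewrite [X in _ <= X](Exp_ext p (X' := fun _ => Phi c (M, N, w))); last by move=> H.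
  by rewrite [X in _ <= X]Exp_const.
rewrite [X in _ <= X](Exp_ext p (X' := fun H => Phi c (iter k (step H) (step H (M, N, w)))));
  last by move=> H; rewrite iterSr.
case hc: (cand M N == set0).
  rewrite [X in _ <= X](Exp_ext p (X' := fun H => Phi c (iter k (step H) (M, N, w))));
    last by move=> H; rewrite step_eq hc.
  exact: IH.
set e := chosen M N.
set sM := (e |: M, N, wupd M N w); set sN := (M, e |: N, wupd M N w).
rewrite [X in _ <= X](Exp_ext p (X' := fun H => if e \in H then Phi c (iter k (step H) sM)
                                 else Phi c (iter k (step H) sN)));
  last by move=> H; rewrite step_eq hc; case: (e \in H).
have T0 := Exp1_ge0 U hp0 hp1.
rewrite (Exp_split hp0 hp1 he2); first last.
- move=> K hK; congr (Phi c _); apply: iter_agree => x hx; rewrite !inE.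
  case: eqP => [exe|//]; move: hx; rewrite exe /Dset /= !inE eqxx; by rewrite orbT.
- move=> K hK; congr (Phi c _); apply: iter_agree => x hx; rewrite !inE.
  case: eqP => [exe|//]; move: hx; rewrite exe /Dset /= !inE eqxx //.
have wM : forall x, 0 <= (wupd M N w) x.
  by move=> x; rewrite /wupd ffunE; case: ifP => _ //; exact: marg_ge0.
have iM := IH sM wM.
have iN := IH sN wM.
have hstep := Phi_step tbV fmono fsub hp0 hp1 he2 w0 (negbT hc) (hbud e).
apply: le_trans (_ : (p * Phi c sM + eps * Phi c sN) * Exp p (fun _ : {set U} => 1) <= _).
  exact: ler_wpM2r.
rewrite mulrDl -!mulrA; apply: lerD; apply: ler_wpM2l => //.
  exact: ltW.
by move: hp1; lra.
Qed.

End S4.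
Lemma bin_bound i : ('C((i + i).+2, i.+2) <= 4 ^ i)%N.
Proof.
elim: i => [//|i IH].
set m := i.+1.
have e1 := mul_bin_diag ((m + m).+2) m.+1.
have e2 := mul_bin_diag ((m + m).+1) m.
have e3 := mul_bin_left (m + m) m.
rewrite /= in e1 e2.
have em : ((m + m) - m = m)%N by lia.
rewrite em in e3.
have hm : (0 < m)%N by [].
have key : ('C((m + m).+2, m.+2) <= 4 * 'C(m + m, m.+1))%N.
  move: hm e1 e2 e3.
  move: ('C((m + m).+2, m.+2)) ('C((m + m).+1, m.+1)) ('C(m + m, m)) ('C(m + m, m.+1)).
  move=> C' D C0 C1 hm e1 e2 e3; nia.
apply: leq_trans key _.
have -> : (m + m = (i + i).+2)%N by rewrite /m; lia.
by rewrite expnS leq_mul2l.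
Qed.

Lemma geom_sum (R : realType) (r : R) n : (1 - r) * \sum_(i < n) r ^+ i = 1 - r ^+ n.
Proof.
elim: n => [|n IH]; first by rewrite big_ord0 expr0; ring.
by rewrite big_ord_recr /= mulrDr IH exprS; ring.
Qed.

Lemma geom_le (R : realType) (r : R) n : 0 <= r -> r < 1 ->
  \sum_(i < n) r ^+ i <= (1 - r)^-1.
Proof.
move=> r0 r1.
have h1 : 0 < 1 - r by lra.
have -> : \sum_(i < n) r ^+ i = (1 - r)^-1 * (1 - r ^+ n).
  by rewrite -geom_sum mulrA mulVf ?mul1r // lt0r_neq0.
rewrite -[X in _ <= X]mulr1; apply: ler_wpM2l; first by rewrite invr_ge0 ltW.
by rewrite lerBlDr lerDl exprn_ge0.
Qed.
Lemma chain_sum (R : realType) (U : finType) (F : {set {set U}})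
  (mu : {set U} -> nat) (g : nat -> R) (e : U) (n : nat) :
  laminar F -> (forall B : {set U}, B \in F -> (0 < mu B)%N) ->
  (forall B B' : {set U}, B \in F -> B' \in F -> B \proper B' -> (mu B < mu B')%N) ->
  (forall i, 0 <= g i) -> (forall B : {set U}, B \in F -> (mu B < n)%N) ->
  \sum_(B in F | e \in B) g (mu B) <= \sum_(i < n) (if (0 < i)%N then g i else 0).
Proof.
move=> hlam hpos hinc g0 hn.
have step1 : \sum_(B in F | e \in B) g (mu B) =
   \sum_(B in F | e \in B) \sum_(i < n) (if (i == mu B :> nat) then g i else 0).
  apply: eq_bigr => B /andP[hB _].
  by rewrite -big_mkcond /= (big_pred1 (Ordinal (hn B hB))).
rewrite step1 exchange_big /=; apply: ler_sum => i _.
rewrite -big_mkcondr /=.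
have R0 : 0 <= (if (0 < i)%N then g i else 0) by case: ifP.
case: (pickP (fun B => [&& B \in F, e \in B & (i == mu B :> nat)])) => [B0 hB0|hnone].
  move/and3P: (hB0) => [hF0 he0 /eqP hi0].
  rewrite (big_pred1 B0).
    by rewrite hi0 (hpos _ hF0).
  move=> B; rewrite /=; apply/idP/idP.
    move=> /andP[/andP[hF he] /eqP hi]; apply/eqP.
    have hmu : mu B = mu B0 by rewrite -hi -hi0.
    case: (hlam B B0 hF hF0) => [hd|[hs|hs]].
    - by move: (disjointFr hd he); rewrite he0.
    - case: (eqVneq B B0) => // hne.
      have : B \proper B0 by rewrite properEneq hne hs.
      by move/(hinc _ _ hF hF0); rewrite hmu ltnn.
    - case: (eqVneq B B0) => // hne.
      have : B0 \proper B by rewrite properEneq eq_sym hne hs.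
      by move/(hinc _ _ hF0 hF); rewrite hmu ltnn.
  by move/eqP => ->; rewrite hF0 he0 hi0 eqxx.
rewrite big_pred0 //.
by move=> B; rewrite /= -andbA; apply: hnone.
Qed.
Lemma final_arith (R : realType) (p E e2 x beta : R) :
  0 < p -> p < 1 -> 2 <= E -> e2 = 2 * (1 - p) -> x = e2 * (1 - e2)^-1 ->
  beta = 2 * E * (1 - p) -> beta <= 1 / 4 ->
  e2 * x * (1 - 4 * x)^-1 <= 2 * beta / (1 - beta) ^+ 3 * (1 - p).
Proof.
move=> hp0 hp1 hE de2 dx dbeta hb.
set eps := 1 - p.
have he : 0 < eps by rewrite /eps; lra.
have he16 : eps <= 1 / 16.
  have : 4 * eps <= beta.
    rewrite dbeta -/eps -subr_ge0.
    have -> : 2 * E * eps - 4 * eps = (2 * eps) * (E - 2) by ring.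
    by apply: mulr_ge0; lra.
  lra.
have ha : 0 < 1 - e2 by rewrite de2 -/eps; lra.
have hb0 : 0 < 1 - 5 * e2 by rewrite de2 -/eps; lra.
have hx : e2 * x * (1 - 4 * x)^-1 = e2 ^+ 2 / (1 - 5 * e2).
  rewrite dx; field.
  rewrite de2 -/eps; apply/andP; split; apply/eqP; lra.
rewrite hx.
have hbeta0 : 0 <= beta by rewrite dbeta -/eps; apply: mulr_ge0; [apply: mulr_ge0|]; lra.
have hbeta1 : beta <= 1 / 4 by [].
have hd0 : 0 < (1 - beta) ^+ 3 by rewrite exprn_gt0 //; lra.
rewrite ler_pdivrMr //.
rewrite (_ : 2 * beta / (1 - beta) ^+ 3 * eps * (1 - 5 * e2) =
   (2 * beta * eps * (1 - 5 * e2)) / (1 - beta) ^+ 3); last by rewrite mulrAC [in RHS]mulrAC mulrAC; ring.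
rewrite ler_pdivlMr //.
have hd : (1 - beta) ^+ 3 <= 1 - beta.
  have h1 : 0 <= 1 - beta by lra.
  have h2 : 1 - beta <= 1 by lra.
  have hsq : (1 - beta) ^+ 2 <= 1.
    by rewrite expr2; have := ler_pM h1 h1 h2 h2; rewrite mul1r.
  rewrite exprSr; have := ler_wpM2r h1 hsq; rewrite mul1r; exact.
have h4 : e2 ^+ 2 * (1 - beta) ^+ 3 <= e2 ^+ 2 * (1 - beta).
  by apply: ler_wpM2l; rewrite ?exprn_ge0 //; lra.
apply: le_trans h4 _.
have -> : 2 * beta * eps * (1 - 5 * e2) = e2 ^+ 2 * (E - 5 * beta).
  by rewrite dbeta de2 -/eps; ring.
apply: ler_wpM2l; first by rewrite exprn_ge0 //; rewrite de2; lra.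
lra.
Qed.
Lemma budget (R : realType) (U : finType) (F : {set {set U}})
  (mu : {set U} -> nat) (p : R) (e : U) :
  laminar F -> (forall B : {set U}, B \in F -> (0 < mu B)%N) ->
  (forall B B' : {set U}, B \in F -> B' \in F -> B \proper B' -> (mu B < mu B')%N) ->
  0 < p -> p < 1 -> 2 * expR 1 * (1 - p) <= 1 / 4 ->
  \sum_(B in F | e \in B) qm (2 * (1 - p)) ((1 - 2 * (1 - p))^-1) (mu B) 0 0
  <= 2 * (2 * expR 1 * (1 - p)) / (1 - 2 * expR 1 * (1 - p)) ^+ 3 * (1 - p).
Proof.
move=> hlam hpos hinc hp0 hp1 hb.
have hE : 2 <= expR 1 :> R by have := expR_ge1Dx (1 : R); lra.
set E := expR 1 in hE hb *.
set e2 := 2 * (1 - p).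
set yv := (1 - e2)^-1.
set x := e2 * yv.
have he16 : 1 - p <= 1 / 16.
  have : 4 * (1 - p) <= 2 * E * (1 - p).
    rewrite -subr_ge0.
    have -> : 2 * E * (1 - p) - 4 * (1 - p) = (2 * (1 - p)) * (E - 2) by ring.
    by apply: mulr_ge0; lra.
  lra.
have e20 : 0 <= e2 by rewrite /e2; lra.
have ha : 0 < 1 - e2 by rewrite /e2; lra.
have yv1 : 1 <= yv by rewrite /yv invf_ge1 //; lra.
have x0 : 0 <= x by rewrite /x mulr_ge0 //; lra.
have r1 : 4 * x < 1.
  have hx' : x * (1 - e2) = e2.
    by rewrite /x /yv -mulrA mulVf ?mulr1 // lt0r_neq0.
  rewrite -(ltr_pM2r ha) mul1r -mulrA hx' /e2; lra.
set n := (\sum_(B in F) mu B).+1.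
have hn : forall B : {set U}, B \in F -> (mu B < n)%N.
  by move=> B hB; rewrite /n ltnS (bigD1 B) //= leq_addr.
have g0 : forall i, 0 <= qm e2 yv i 0 0 by move=> i; exact: qk_ge0.
apply: le_trans (chain_sum e hlam hpos hinc g0 hn) _.
rewrite /n big_ord_recl /= add0r.
have hg : forall i : nat, qm e2 yv i.+1 0 0 <= e2 * x * (4 * x) ^+ i.
  move=> i; rewrite /qm /qk subn0.
  have -> : (i.+2 + i.+1 - 1 = (i + i).+2)%N by lia.
  have hC : (('C((i + i).+2, i.+2))%:R : R) <= 4 ^+ i.
    by rewrite -natrX ler_nat bin_bound.
  apply: le_trans (_ : e2 ^+ i.+2 * yv ^+ i.+1 * 4 ^+ i <= _).
    by apply: ler_wpM2l => //; rewrite mulr_ge0 // exprn_ge0 //; lra.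
  have -> : e2 * (e2 * yv) * (4 * (e2 * yv)) ^+ i = e2 ^+ i.+2 * yv ^+ i.+1 * 4 ^+ i.
    by rewrite /e2 !exprMn !exprS; ring.
  by [].
apply: le_trans (_ : \sum_(i < \sum_(B in F) mu B) e2 * x * (4 * x) ^+ i <= _).
  by apply: ler_sum => i _; exact: hg i.
rewrite -mulr_sumr.
apply: le_trans (_ : e2 * x * (1 - 4 * x)^-1 <= _).
  apply: ler_wpM2l; first exact: mulr_ge0.
  apply: geom_le => //; lra.
apply: (final_arith (E := E)) => //.
Qed.
Lemma sum_bigcup (R : realType) (U : finType) (I : finType) (P : pred I)
  (A : I -> {set U}) (N : {set U}) (w : U -> R) : (forall x, 0 <= w x) ->
  \sum_(x in N :&: \bigcup_(i | P i) A i) w x <= \sum_(i | P i) \sum_(x in A i) w x.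
Proof.
move=> w0.
rewrite big_mkcond /=.
rewrite (eq_bigr (fun i => \sum_x (if x \in A i then w x else 0))); last first.
  by move=> i _; rewrite big_mkcond.
rewrite exchange_big /=; apply: ler_sum => x _.
case: ifP => hx; last by apply: sumr_ge0 => i _; case: ifP.
move: hx; rewrite inE => /andP[_ /bigcupP[i0 hPi hxi]].
rewrite (bigD1 i0) //= hxi -[X in X <= _]addr0 lerD2l.
by apply: sumr_ge0 => i _; case: ifP.
Qed.

Section S5.
Variables (R : realType) (U : finType) (F : {set {set U}})
  (mu : {set U} -> nat) (f : {set U} -> R)
  (tb : {set U} -> {set U} -> {set U} -> U) (p : R).
Hypothesis fmono : monotone_fun f.
Hypotheses (hp0 : 0 < p) (hp1 : p < 1) (he2 : 2 * (1 - p) < 1).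

Local Notation Pen := (Pen F mu f tb p).
Local Notation Phi := (Phi F mu f tb p).

Lemma Pen_ge0 B (M N : {set U}) (w : {ffun U -> R}) : (forall x, 0 <= w x) ->
  0 <= Pen B (M, N, w).
Proof.
move=> w0; rewrite /Pen; case: ifP => // _.
apply: mulr_ge0; last exact: (qk_ge0 (e2_ge0 hp1) (yv_ge1 hp1 he2) _ _).
apply: addr_ge0; first by apply: sumr_ge0.
exact: Lval_ge0.
Qed.

Lemma Pen_viol B (M N : {set U}) (w : {ffun U -> R}) : (forall x, 0 <= w x) ->
  (mu B < #|N :&: B|)%N -> wsum w (N :&: B) <= Pen B (M, N, w).
Proof.
move=> w0 hv; rewrite /Pen.
have -> : (#|M :&: B| + #|N :&: B| == 0)%N = false.
  by apply/negbTE; rewrite addn_eq0 negb_and; apply/orP; right; rewrite -lt0n; apply: leq_ltn_trans hv.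
have W0 : 0 <= wsum w (N :&: B) by apply: sumr_ge0.
have q1 := qm_viol (ltW hp0) (e2_ge0 hp1) (yv_ge1 hp1 he2) (pyv hp1 he2)
  #|M :&: B| hv.
apply: le_trans (_ : wsum w (N :&: B) * 1 <= _); first by rewrite mulr1.
apply: ler_pM => //.
by rewrite lerDl; exact: Lval_ge0.
Qed.

Lemma pointwise c (M N : {set U}) (w : {ffun U -> R}) : (forall x, 0 <= w x) ->
  (1 - c) * wsum w N + Phi c (M, N, w) <= wsum w (prune F mu N).
Proof.
move=> w0.
set X := \bigcup_(B in F | (mu B < #|N :&: B|)%N) (N :&: B).
have hsplit : wsum w N = wsum w (N :&: X) + wsum w (prune F mu N).
  by rewrite /wsum /prune (big_setID X).
have h1 : wsum w (N :&: X) <= \sum_(B in F | (mu B < #|N :&: B|)%N) wsum w (N :&: B).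
  exact: sum_bigcup.
have h2 : \sum_(B in F | (mu B < #|N :&: B|)%N) wsum w (N :&: B)
          <= \sum_(B in F) Pen B (M, N, w).
  rewrite big_mkcondr /=; apply: ler_sum => B _.
  case: ifP => hv; first exact: Pen_viol.
  exact: Pen_ge0.
have -> : Phi c (M, N, w) = c * wsum w N - \sum_(B in F) Pen B (M, N, w) by [].
move: hsplit h1 h2.
set a := wsum w (N :&: X); set b := wsum w (prune F mu N); set W := wsum w N.
set S1 := \sum_(B in F | _) _; set S := \sum_(B in F) _.
move=> hsplit h1 h2.
have -> : (1 - c) * W + (c * W - S) = W - S by ring.
lra.
Qed.

End S5.
Unset Implicit Arguments.

Theorem lemma3 (R : realType) (U : finType) (F : {set {set U}})
  (mu : {set U} -> nat) (f : {set U} -> R)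
  (tb : {set U} -> {set U} -> {set U} -> U) (p : R) :
  laminar F ->
  (forall B, B \in F -> (0 < mu B)%N) ->
  (forall B B', B \in F -> B' \in F -> B \proper B' -> (mu B < mu B')%N) ->
  nonneg_fun f -> monotone_fun f -> submodular f ->
  valid_tiebreak tb ->
  0 < p < 1 ->
  let beta := 2 * expR 1 * (1 - p) in
  beta < 1 ->
  Exp p (fun H => wsum (sim_w F mu f tb H) (prune F mu (sim_N F mu f tb H)))
  >= (1 - 2 * beta / (1 - beta) ^+ 3)
     * Exp p (fun H => wsum (sim_w F mu f tb H) (sim_N F mu f tb H)).
Proof.
move=> hlam hpos hinc fnn fmono fsub tbV /andP[hp0 hp1] beta hbeta.
have inv0 : forall H x, 0 <= (simulate F mu f tb H).2 x.
  move=> H; apply: (inv_iter F mu tb fmono #|U| H (s := (set0, set0, [ffun => 0]))).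
  by move=> x; rewrite /= ffunE.
have hW0 : forall H, 0 <= wsum (sim_w F mu f tb H) (sim_N F mu f tb H).
  by move=> H; apply: sumr_ge0 => x _; apply: inv0.
have hWp0 : forall H, 0 <= wsum (sim_w F mu f tb H) (prune F mu (sim_N F mu f tb H)).
  by move=> H; apply: sumr_ge0 => x _; apply: inv0.
have Exp0 : forall X : {set U} -> R, (forall H, 0 <= X H) -> 0 <= Exp p X.
  move=> X hX; apply: sumr_ge0 => H _; apply: mulr_ge0; last exact: hX.
  exact: (Pw_ge0 hp0 hp1 H).
have hE : 2 <= expR 1 :> R by have := expR_ge1Dx (1 : R); lra.
have hb0 : 4 * (1 - p) <= beta.
  rewrite /beta -subr_ge0.
  have -> : 2 * expR 1 * (1 - p) - 4 * (1 - p) = (2 * (1 - p)) * (expR 1 - 2) by ring.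
  by apply: mulr_ge0; lra.
case: (boolP (beta <= 1 / 4)) => hb.
  have he2 : 2 * (1 - p) < 1 by lra.
  set c := 2 * beta / (1 - beta) ^+ 3.
  have hbud : forall e : U, \sum_(B in F | e \in B)
      qm (2 * (1 - p)) ((1 - 2 * (1 - p))^-1) (mu B) 0 0 <= c * (1 - p).
    by move=> e; apply: budget.
  have hm' := main_ind tbV fmono fsub hp0 hp1 he2 hbud #|U|
     (s := (set0, set0, [ffun => 0])).
  have hPhi0 : Phi F mu f tb p c (set0, set0, [ffun => 0]) = 0.
    rewrite /Phi /= /wsum big_set0 mulr0 sub0r big1 ?oppr0 // => B _.
    by rewrite /Pen !set0I cards0.
  have hm2 : 0 <= Exp p (fun H => Phi F mu f tb p c (simulate F mu f tb H)).
    have h0 : forall x, 0 <= ((set0, set0, [ffun => 0]) : state R U).2 x.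
      by move=> x; rewrite /= ffunE.
    by have := hm' h0; rewrite hPhi0 mul0r.
  have hpt : forall H, (1 - c) * wsum (sim_w F mu f tb H) (sim_N F mu f tb H)
      + Phi F mu f tb p c (simulate F mu f tb H)
      <= wsum (sim_w F mu f tb H) (prune F mu (sim_N F mu f tb H)).
    move=> H; rewrite /sim_w /sim_N.
    move: (inv0 H); case: (simulate F mu f tb H) => [[M N] w] w0 /=.
    exact: pointwise.
  apply: le_trans (Exp_mono hp0 hp1 hpt).
  rewrite Exp_lin -[X in X <= _]addr0 lerD2l.
  exact: hm2.
have hc : 1 <= 2 * beta / (1 - beta) ^+ 3.
  have hu0 : 0 < 1 - beta by lra.
  have hu1 : 1 - beta <= 3 / 4 by lra.
  rewrite ler_pdivlMr ?exprn_gt0 // mul1r.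
  have hsq : (1 - beta) ^+ 2 <= 9 / 16.
    rewrite expr2; have := ler_pM (ltW hu0) (ltW hu0) hu1 hu1.
    by move=> h; apply: le_trans h _; lra.
  rewrite exprSr; have := ler_wpM2r (ltW hu0) hsq => h.
  apply: le_trans h _; lra.
apply: le_trans (_ : 0 <= _).
  by rewrite mulr_le0_ge0 // ?subr_le0 //; apply: Exp0.
by apply: Exp0.
Qed.
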